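(* Let $H$ be the simple graph with vertex set $\{A,B,C,D,E,F,G\}$ and edge set $\{AC, AD, AE, AF, AG, BD, BE, CE, CF, CG, DE, DG, EG\}$. Then any graph containing an induced subgraph isomorphic to $H$ is not a divisor graph.
   Context: For a nonempty set $S$ of positive integers, the divisor graph $G(S)$ has vertex set $S$, with distinct $i,j$ adjacent iff $i\mid j$ or $j\mid i$. A graph is a divisor graph if it is isomorphic to $G(S)$ for some nonempty set $S$ of positive integers. *)

(* Defs.v *)
From mathcomp Require Import all_boot.
Set Implicit Arguments. Unset Strict Implicit. Unset Printing Implicit Defensive.

(* Vertices A,B,C,D,E,F,G of H are encoded as 0,1,2,3,4,5,6 in 'I_7. *)
Definition H_edges : seq (nat * nat) :=
  [:: (0,2); (0,3); (0,4); (0,5); (0,6); (1,3); (1,4); (2,4); (2,5); (2,6);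
      (3,4); (3,6); (4,6)].

Definition H_adj (i j : 'I_7) : bool :=
  ((i : nat, j : nat) \in H_edges) || ((j : nat, i : nat) \in H_edges).

Definition simple_graph (V : Type) (adj : V -> V -> Prop) : Prop :=
  (forall u v, adj u v -> adj v u) /\ (forall v, ~ adj v v).

Definition divisor_adj (i j : nat) : Prop := i <> j /\ (i %| j \/ j %| i).

Definition is_divisor_graph (V : Type) (adj : V -> V -> Prop) : Prop :=
  exists S : nat -> Prop,
    (exists s, S s) /\ (forall s, S s -> 0 < s) /\
    exists f : V -> nat,
      injective f /\ (forall s, S s <-> exists v, f v = s) /\
      (forall u v, adj u v <-> divisor_adj (f u) (f v)).

Definition has_induced_H (V : Type) (adj : V -> V -> Prop) : Prop :=
  exists f : 'I_7 -> V, injective f /\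
    (forall i j, adj (f i) (f j) <-> H_adj i j).

(* Main.v *)
Require Import Defs.
From mathcomp Require Import all_boot.

Lemma core (a b c d e f g : nat) :
  (a %| c \/ c %| a) -> (a %| d \/ d %| a) -> (a %| e \/ e %| a) ->
  (a %| f \/ f %| a) -> (a %| g \/ g %| a) -> (b %| d \/ d %| b) ->
  (b %| e \/ e %| b) -> (c %| e \/ e %| c) -> (c %| f \/ f %| c) ->
  (c %| g \/ g %| c) -> (d %| e \/ e %| d) -> (d %| g \/ g %| d) ->
  (e %| g \/ g %| e) ->
  ~~ (a %| b) -> ~~ (b %| a) -> ~~ (b %| c) -> ~~ (c %| b) ->
  ~~ (b %| f) -> ~~ (f %| b) -> ~~ (b %| g) -> ~~ (g %| b) ->
  ~~ (c %| d) -> ~~ (d %| c) -> ~~ (d %| f) -> ~~ (f %| d) ->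
  ~~ (e %| f) -> ~~ (f %| e) -> ~~ (f %| g) -> ~~ (g %| f) -> False.
Proof.
move=> ac ad ae af ag bd be ce cf cg de dg eg
  nab nba nbc ncb nbf nfb nbg ngb ncd ndc ndf nfd nef nfe nfg ngf.
case: ac => [ac|ca].
- have {}ad : a %| d by case: ad => // da; case/negP: ndc; exact: dvdn_trans da ac.
  have {}af : a %| f by case: af => // fa; case/negP: nfd; exact: dvdn_trans fa ad.
  have {}ae : a %| e by case: ae => // ea; case/negP: nef; exact: dvdn_trans ea af.
  have {}be : b %| e by case: be => // eb; case/negP: nab; exact: dvdn_trans ae eb.
  have {}ce : c %| e by case: ce => // ec; case/negP: nbc; exact: dvdn_trans be ec.
  have {}cf : c %| f by case: cf => // fc; case/negP: nfe; exact: dvdn_trans fc ce.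
  have {}cg : c %| g by case: cg => // gc; case/negP: ngf; exact: dvdn_trans gc cf.
  have {}bd : b %| d by case: bd => // db; case/negP: nab; exact: dvdn_trans ad db.
  have {}gd : g %| d by case: dg => // dg; case/negP: nbg; exact: dvdn_trans bd dg.
  by case/negP: ncd; exact: dvdn_trans cg gd.
- have {}da : d %| a by case: ad => // ad; case/negP: ncd; exact: dvdn_trans ca ad.
  have {}fa : f %| a by case: af => // af; case/negP: ndf; exact: dvdn_trans da af.
  have {}ea : e %| a by case: ae => // ae; case/negP: nfe; exact: dvdn_trans fa ae.
  have {}eb : e %| b by case: be => // be; case/negP: nba; exact: dvdn_trans be ea.
  have {}ec : e %| c by case: ce => // ce; case/negP: ncb; exact: dvdn_trans ce eb.
  have {}fc : f %| c by case: cf => // cf; case/negP: nef; exact: dvdn_trans ec cf.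
  have {}gc : g %| c by case: cg => // cg; case/negP: nfg; exact: dvdn_trans fc cg.
  have {}db : d %| b by case: bd => // bd; case/negP: nba; exact: dvdn_trans bd da.
  have {}dg : d %| g by case: dg => // gd; case/negP: ngb; exact: dvdn_trans gd db.
  by case/negP: ndc; exact: dvdn_trans dg gc.
Qed.

Theorem lemma2p1 (V : Type) (adj : V -> V -> Prop) :
  simple_graph adj -> has_induced_H adj -> ~ is_divisor_graph adj.
Proof.
move=> _ [h [hinj hadj]] [S [_ [_ [fD [fDinj [_ fDadj]]]]]].
set x := fun i => fD (h i).
have E : forall i j, H_adj i j -> x i %| x j \/ x j %| x i.
  by move=> i j /hadj/fDadj [].
have N : forall i j, i != j -> ~~ H_adj i j -> ~~ (x i %| x j).
  move=> i j ij nH; apply/negP => dv.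
  have : adj (h i) (h j).
    apply/fDadj; split; last by left.
    by move/fDinj/hinj => eq; rewrite eq eqxx in ij.
  by move/hadj; rewrite (negbTE nH).
pose o0 := @Ordinal 7 0 isT. pose o1 := @Ordinal 7 1 isT.
pose o2 := @Ordinal 7 2 isT. pose o3 := @Ordinal 7 3 isT.
pose o4 := @Ordinal 7 4 isT. pose o5 := @Ordinal 7 5 isT.
pose o6 := @Ordinal 7 6 isT.
apply: (@core (x o0) (x o1) (x o2) (x o3) (x o4) (x o5) (x o6));
  (apply: E; by []) || (apply: N; by []).
Qed.
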